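(* Let $n\ge 7$ and let $G\in B^{++}_n$. (1) $\mathrm{irr}_t(G)\ge 2n-4$. Equality holds if and only if the degree sequence of $G$ is $(3,3,2,\ldots,2)$, i.e. two vertices of degree $3$ and $n-2$ vertices of degree $2$. (2) If the degree sequence of $G$ is not $(3,3,2,\ldots,2)$, then $\mathrm{irr}_t(G)\ge 4n-10$. Equality holds if and only if the degree sequence of $G$ is $(3,3,3,2,\ldots,2,1)$, i.e. three vertices of degree $3$, $n-4$ vertices of degree $2$ and one vertex of degree $1$.
   Context: A bicyclic graph is a simple connected graph whose number of edges equals its number of vertices plus one. For a graph $G=(V,E)$ and $w\in V$, $d_G(w)$ is the degree of $w$. The total irregularity is $\mathrm{irr}_t(G)=\frac12\sum_{x,y\in V}|d_G(x)-d_G(y)|$, where the sum runs over all ordered pairs of vertices. Degree sequences are listed in nonincreasing order. For $p,q\ge 3$ and $l\ge 1$, the $\infty$-graph $\infty(p,q,l)$ is obtained from two vertex-disjoint cycles $C_p$ and $C_q$ by joining a vertex of $C_p$ and a vertex of $C_q$ with a path having $l$ vertices (i.e. length $l-1$). $B^{++}_n$ denotes the set of bicyclic graphs on $n$ vertices obtained from some $\infty(p,q,l)$ with $l\ge 2$ by attaching trees. Equivalently, these are the bicyclic graphs on $n$ vertices whose two cycles are vertex-disjoint. *)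

(* Defs.v *)
From mathcomp Require Import all_boot.
Set Implicit Arguments. Unset Strict Implicit. Unset Printing Implicit Defensive.

Definition simple_graph (T : finType) (e : rel T) : Prop :=
  symmetric e /\ irreflexive e.

Definition connected (T : finType) (e : rel T) : Prop :=
  forall x y : T, connect e x y.

Definition num_edges (T : finType) (e : rel T) : nat :=
  #|[set p : T * T | e p.1 p.2]| %/ 2.

Definition bicyclic (T : finType) (e : rel T) : Prop :=
  [/\ simple_graph e, connected e & num_edges e = #|T|.+1].

Definition is_graph_cycle (T : finType) (e : rel T) (c : seq T) : bool :=
  [&& 3 <= size c, uniq c & cycle e c].

Definition Bpp (T : finType) (e : rel T) : Prop :=
  bicyclic e /\
  exists c1 c2 : seq T,
    [/\ is_graph_cycle e c1, is_graph_cycle e c2 & [disjoint c1 & c2]].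

Definition deg (T : finType) (e : rel T) (x : T) : nat := #|[set y | e x y]|.

Definition absdiff (a b : nat) : nat := (a - b) + (b - a).

(* total irregularity: 1/2 sum over ordered pairs |d(x)-d(y)| (sum is even) *)
Definition irr_t (T : finType) (e : rel T) : nat :=
  (\sum_(x : T) \sum_(y : T) absdiff (deg e x) (deg e y)) %/ 2.

Definition degseq (T : finType) (e : rel T) : seq nat :=
  sort geq [seq deg e x | x <- enum T].

(* Main.v *)
Require Import Defs.
From mathcomp Require Import all_boot zify.

Definition Irr2 (s : seq nat) := \sum_(a <- s) \sum_(b <- s) absdiff a b.

Lemma sumb (P : pred nat) s : \sum_(a <- s) (P a : nat) = count P s.
Proof. elim: s => [|x s IH]; by rewrite ?big_nil ?big_cons ?IH. Qed.

Definition fb (a b : nat) : nat :=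
  (a == 2) * absdiff b 2 + (b == 2) * absdiff a 2 +
  2 * ((a == 1) * (3 <= b)) + 2 * ((3 <= a) * (b == 1)).

Lemma fb_le a b : fb a b <= absdiff a b.
Proof.
rewrite /fb /absdiff.
case: a => [|[|[|a]]]; case: b => [|[|[|b]]] /=; lia.
Qed.

Lemma inner_eq a t : \sum_(b <- t) fb a b =
   (a == 2) * \sum_(b <- t) absdiff b 2 + count (pred1 2) t * absdiff a 2
   + 2 * ((a == 1) * count (fun x => 3 <= x) t)
   + 2 * ((3 <= a) * count (pred1 1) t).
Proof.
elim: t => [|x t IH]; first by rewrite !big_nil /=; lia.
rewrite !big_cons IH /= /fb; lia.
Qed.

Lemma outer_eq u t :
  \sum_(a <- u) \sum_(b <- t) fb a b =
   count (pred1 2) u * \sum_(b <- t) absdiff b 2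
   + count (pred1 2) t * \sum_(a <- u) absdiff a 2
   + 2 * (count (pred1 1) u * count (fun x => 3 <= x) t)
   + 2 * (count (fun x => 3 <= x) u * count (pred1 1) t).
Proof.
elim: u => [|x u IH]; first by rewrite !big_nil /=; lia.
rewrite !big_cons IH inner_eq /=; lia.
Qed.

Lemma Irr2_lb s :
  2 * count (pred1 2) s * (\sum_(b <- s) absdiff b 2)
  + 4 * count (pred1 1) s * count (fun x => 3 <= x) s <= Irr2 s.
Proof.
apply: (@leq_trans (\sum_(a <- s) \sum_(b <- s) fb a b)); last first.
  by apply: leq_sum => a _; apply: leq_sum => b _; apply: fb_le.
rewrite outer_eq.
move: (\sum_(b <- s) absdiff b 2) (count_mem 2 s) (count_mem 1 s) (count [eta leq 3] s) => G a b c. nia.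
Qed.

Section C.
Variable s : seq nat.
Hypothesis Hpos : all (fun x => 0 < x) s.

Lemma F1 : size s = count (pred1 1) s + count (pred1 2) s + count (fun x => 3 <= x) s.
Proof.
elim: s Hpos => [|x t IH] //= /andP [hx ht]; rewrite IH //.
case: x hx => [|[|[|x]]] //= _; lia.
Qed.

Lemma F2 : \sum_(b <- s) absdiff b 2 = count (pred1 1) s + \sum_(b <- s) (b - 2).
Proof.
elim: s Hpos => [|x t IH] /=; first by rewrite !big_nil.
move=> /andP [hx ht]; rewrite !big_cons IH //.
rewrite /absdiff; case: x hx => [|[|[|x]]] //= _; lia.
Qed.

Lemma F3 : \sum_(b <- s) b + count (pred1 1) s = \sum_(b <- s) (b - 2) + 2 * size s.
Proof.
elim: s Hpos => [|x t IH] /=; first by rewrite !big_nil.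
move=> /andP [hx ht]; rewrite !big_cons.
have := IH ht. case: x hx => [|[|[|x]]] //= _; lia.
Qed.
End C.

Lemma F4 s : count (fun x => 3 <= x) s <= \sum_(b <- s) (b - 2).
Proof.
elim: s => [|x t IH] /=; first by rewrite !big_nil.
rewrite !big_cons; case: x => [|[|[|x]]] /=; lia.
Qed.

Lemma F5 s : count (fun x => 3 <= x) s = \sum_(b <- s) (b - 2) -> all (fun x => x <= 3) s.
Proof.
elim: s => [|x t IH] //=.
rewrite !big_cons => h. have h4 := F4 t.
have hx : x <= 3 by move: h; case: x => [|[|[|[|x]]]] /= h; lia.
rewrite hx /=; apply: IH; move: h hx; case: x => [|[|[|[|x]]]] /= h hx; lia.
Qed.

Definition in123 (x : nat) := (x == 1) || (x == 2) || (x == 3).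

Lemma inner2 a t : in123 a -> all in123 t -> \sum_(b <- t) absdiff a b =
  (a == 1) * (count (pred1 2) t + 2 * count (pred1 3) t)
  + (a == 2) * (count (pred1 1) t + count (pred1 3) t)
  + (a == 3) * (2 * count (pred1 1) t + count (pred1 2) t).
Proof.
move=> ha; elim: t => [|x t IH] /=; first by rewrite big_nil; lia.
move=> /andP [hx ht]; rewrite big_cons IH //.
move: ha hx; rewrite /in123 /absdiff.
case: (a) => [|[|[|[|a']]]] //= _; case: x => [|[|[|[|x]]]] //= _; lia.
Qed.

Lemma Irr2_exact s : all in123 s -> Irr2 s =
  2 * (count (pred1 1) s * count (pred1 2) s + 2 * (count (pred1 1) s * count (pred1 3) s)
       + count (pred1 2) s * count (pred1 3) s).
Proof.
move=> hs; rewrite /Irr2.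
have : forall u, all in123 u -> \sum_(a <- u) \sum_(b <- s) absdiff a b =
  count (pred1 1) u * (count (pred1 2) s + 2 * count (pred1 3) s)
  + count (pred1 2) u * (count (pred1 1) s + count (pred1 3) s)
  + count (pred1 3) u * (2 * count (pred1 1) s + count (pred1 2) s).
  elim => [|x u IH] /=; first by rewrite big_nil.
  move=> /andP [hx hu]; rewrite big_cons IH // inner2 //.
  move: hx; rewrite /in123; case: x => [|[|[|[|x]]]] //= _; lia.
move=> ->; last by [].
move: (count _ s) (count _ s) (count _ s) => x y z; nia.
Qed.

Lemma count123 (P : pred nat) s : all in123 s ->
  count P s = P 1 * count (pred1 1) s + P 2 * count (pred1 2) s + P 3 * count (pred1 3) s.
Proof.
elim: s => [|x t IH] /=; first by rewrite !muln0.
move=> /andP [hx ht]; rewrite IH //.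
move: hx; rewrite /in123; case: x => [|[|[|[|x]]]] //= _; lia.
Qed.

Definition D a b c := nseq c 3 ++ nseq b 2 ++ nseq a 1.

Lemma path_mono x y t : y <= x -> path geq y t -> path geq x t.
Proof. case: t => [|z t] //= hxy /andP [h1 h2]; rewrite h2 andbT; apply: leq_trans h1 hxy. Qed.

Lemma path_nseq_cat x m y t : y <= x -> path geq y t -> path geq x (nseq m y ++ t).
Proof.
elim: m x => [|m IH] x hxy ht /=; first exact: path_mono ht.
by rewrite hxy IH.
Qed.

Lemma sortedD a b c : sorted geq (D a b c).
Proof.
apply: (@path_sorted _ _ 3).
apply: path_nseq_cat => //; apply: path_nseq_cat => //.
by rewrite -[nseq a 1]cats0; apply: path_nseq_cat.
Qed.

Lemma geq_total : total geq. Proof. move=> x y /=; exact: leq_total. Qed.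
Lemma geq_trans' : transitive geq. Proof. move=> x y z /= h1 h2; exact: leq_trans h2 h1. Qed.
Lemma geq_anti : antisymmetric geq.
Proof. move=> x y /andP [h1 h2]; apply/eqP; rewrite eqn_leq; apply/andP; split; [exact: h2|exact: h1]. Qed.

Lemma allD a b c : all in123 (D a b c).
Proof.
rewrite /D !all_cat; apply/and3P; split; apply/allP => x /nseqP [-> _] //.
Qed.

Lemma D_char s a b c : sort geq s = D a b c <->
  [/\ all in123 s, count (pred1 1) s = a, count (pred1 2) s = b & count (pred1 3) s = c].
Proof.
split.
  move=> hs.
  have hp : perm_eq (D a b c) s by rewrite -hs perm_sort.
  have hall : all in123 s by rewrite -(perm_all _ hp) allD.
  move/permP: hp => hp.
  by rewrite -!hp /D !count_cat !count_nseq /=; split => //; lia.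
case=> hall h1 h2 h3.
have hp : perm_eq s (D a b c).
  apply/permP => P; rewrite (@count123 P s hall) (@count123 P _ (allD a b c)) h1 h2 h3.
  by rewrite /D !count_cat !count_nseq /=; lia.
rewrite (perm_sortP geq_total geq_trans' geq_anti _ _ hp).
exact: (sorted_sort geq_trans' (sortedD a b c)).
Qed.

Lemma to123 s : all (fun x => 0 < x) s -> all (fun x => x <= 3) s -> all in123 s.
Proof.
move=> /allP h1 /allP h2; apply/allP => x hx.
move: (h1 x hx) (h2 x hx); rewrite /in123; case: x {hx} => [|[|[|[|x]]]] //.
Qed.

Lemma comb n s : 7 <= n -> size s = n -> all (fun x => 0 < x) s ->
  \sum_(b <- s) b = 2 * n + 2 -> 2 <= count (fun x => 3 <= x) s ->
  [/\ 2 * n - 4 <= Irr2 s %/ 2,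
      Irr2 s %/ 2 = 2 * n - 4 <-> sort geq s = [:: 3; 3] ++ nseq (n - 2) 2,
      sort geq s <> [:: 3; 3] ++ nseq (n - 2) 2 -> 4 * n - 10 <= Irr2 s %/ 2 &
      sort geq s <> [:: 3; 3] ++ nseq (n - 2) 2 ->
        (Irr2 s %/ 2 = 4 * n - 10 <->
         sort geq s = [:: 3; 3; 3] ++ nseq (n - 4) 2 ++ [:: 1])].
Proof.
move=> hn hsz hpos hsum hk.
have E1 : [:: 3; 3] ++ nseq (n - 2) 2 = D 0 (n - 2) 2 by rewrite /D /= cats0.
have E2 : [:: 3; 3; 3] ++ nseq (n - 4) 2 ++ [:: 1] = D 1 (n - 4) 3 by [].
rewrite E1 E2.
have f1 := @F1 s hpos. have f2 := @F2 s hpos. have f3 := @F3 s hpos.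
have f4 := F4 s. have f5 := @F5 s.
have lb := Irr2_lb s.
have hD1 : sort geq s = D 0 (n - 2) 2 -> Irr2 s %/ 2 = 2 * n - 4.
  move/D_char => [ha h1 h2 h3]; rewrite Irr2_exact // h1 h2 h3.
  rewrite mulKn //; lia.
have hD2 : sort geq s = D 1 (n - 4) 3 -> Irr2 s %/ 2 = 4 * n - 10.
  move/D_char => [ha h1 h2 h3]; rewrite Irr2_exact // h1 h2 h3.
  rewrite mulKn //; lia.
set c1 := count (pred1 1) s in f1 f2 f3 lb.
set c2 := count (pred1 2) s in f1 f2 f3 lb.
set k := count (fun x => 3 <= x) s in f1 f2 f3 f4 f5 lb hk.
set X := \sum_(b <- s) (b - 2) in f2 f3 f4 f5.
set G := \sum_(b <- s) absdiff b 2 in f2 lb.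
have hB : c2 * G + 2 * (c1 * k) <= Irr2 s %/ 2.
  have -> : c2 * G + 2 * (c1 * k) = (2 * (c2 * G + 2 * (c1 * k))) %/ 2 by rewrite mulKn.
  apply: leq_div2r; lia.
have hX : X = c1 + 2 by lia.
have charD : forall a b c, count (pred1 1) s = a -> k = X -> c = k -> b = n - a - k ->
    sort geq s = D a b c.
  move=> a b c ha hkX hc hb.
  have hall := @to123 s hpos (f5 hkX).
  have hc3 : count (pred1 3) s = k.
    by rewrite /k (@count123 _ s hall) /=; lia.
  apply/D_char; split => //; lia.
have main : sort geq s <> D 0 (n - 2) 2 -> 4 * n - 10 <= Irr2 s %/ 2 /\
   (sort geq s <> D 1 (n - 4) 3 -> 4 * n - 9 <= Irr2 s %/ 2).
  move=> hn1.
  have [c10|c1pos] := eqVneq c1 0.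
    exfalso; apply: hn1; apply: charD => //; lia.
  have [c11|c1big] := eqVneq c1 1.
    have [k3|k3] := eqVneq k 3.
      split; first by apply: leq_trans hB; rewrite f2 hX c11 k3; nia.
      move=> hn2; exfalso; apply: hn2; apply: charD => //; lia.
    have k2 : k = 2 by lia.
    split; [|move=> _]; apply: leq_trans hB; rewrite f2 hX c11 k2; lia.
  have h2 : 2 <= c1 by lia.
  have : 4 * n - 9 <= c2 * G + 2 * (c1 * k).
    rewrite f2 hX. nia.
  move=> h; split; [|move=> _]; apply: leq_trans hB; lia.
split.
- case: (eqVneq (sort geq s) (D 0 (n - 2) 2)) => [/hD1 ->//|/eqP /main [h _]]; lia.
- split => [h|/hD1 //].
  case: (eqVneq (sort geq s) (D 0 (n - 2) 2)) => [//|/eqP /main [h' _]]; lia.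
- by move/main => [].
- move=> hn1; split => [h|/hD2 //].
  case: (eqVneq (sort geq s) (D 1 (n - 4) 3)) => [//|/eqP hn2].
  have := (main hn1).2 hn2; lia.
Qed.

Lemma card_sum (T : finType) (P : pred T) : #|[set x | P x]| = \sum_(x : T) (P x : nat).
Proof.
rewrite cardsE -sum1_card big_mkcond /=; apply: eq_bigr => x _.
rewrite unfold_in; by case: (P x).
Qed.

Section G.
Variable n : nat.
Variable e : rel 'I_n.
Hypothesis hsym : symmetric e.
Hypothesis hirr : irreflexive e.

Lemma sum_deg : \sum_(x : 'I_n) deg e x = 2 * \sum_(x : 'I_n) \sum_(y : 'I_n) ((x < y) && e x y : nat).
Proof.
have h : forall x y : 'I_n, (e x y : nat) = ((x < y) && e x y) + ((y < x) && e x y).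
  move=> x y; case: (ltngtP x y) => h /=; rewrite ?addn0 ?add0n //.
  have -> : x = y by apply: val_inj.
  by rewrite hirr.
transitivity (\sum_(x : 'I_n) \sum_(y : 'I_n) (e x y : nat)).
  by apply: eq_bigr => x _; rewrite /deg card_sum.
under eq_bigr => x _ do (under eq_bigr => y _ do rewrite h).
rewrite (eq_bigr (fun x : 'I_n => \sum_(y : 'I_n) ((x < y) && e x y : nat) + \sum_(y : 'I_n) ((y < x) && e x y : nat))); last by move=> x _; rewrite big_split.
rewrite big_split /= [X in _ + X = _]exchange_big /=.
have -> : \sum_(j : 'I_n) \sum_(i : 'I_n) ((j < i) && e i j : nat) = \sum_(x : 'I_n) \sum_(y : 'I_n) ((x < y) && e x y : nat).
  by apply: eq_bigr => x _; apply: eq_bigr => y _; rewrite hsym.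
by rewrite mul2n -addnn.
Qed.

Lemma edges_sum : num_edges e = \sum_(x : 'I_n) \sum_(y : 'I_n) ((x < y) && e x y : nat).
Proof.
rewrite /num_edges card_sum.
rewrite -(pair_big xpredT xpredT (fun x y => (e x y : nat))) /=.
have -> : \sum_(i : 'I_n) \sum_(j : 'I_n) (e i j : nat) = \sum_(x : 'I_n) deg e x.
  by apply: eq_bigr => x _; rewrite /deg card_sum.
by rewrite sum_deg mulKn.
Qed.
End G.

Section G2.
Variable T : finType.
Variable e : rel T.
Hypothesis hsym : symmetric e.
Hypothesis hirr : irreflexive e.

Lemma deg_ge (v : T) (s : seq T) : uniq s -> (forall y, y \in s -> e v y) -> size s <= deg e v.
Proof.
move=> hu hs; rewrite /deg cardE; apply: uniq_leq_size => // y hy.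
by rewrite mem_enum inE; apply: hs.
Qed.

Lemma deg_pos (x y : T) : x != y -> connect e x y -> 0 < deg e x.
Proof.
move=> hxy /connectP [[|z p] /= hp hl]; first by rewrite hl eqxx in hxy.
move/andP: hp => [hz _].
apply: (@deg_ge x [:: z]) => // w; by rewrite inE => /eqP ->.
Qed.

Lemma cyc_nb (c : seq T) v : is_graph_cycle e c -> v \in c ->
  exists a b, [/\ a \in c, b \in c, a != b, e v a & e v b].
Proof.
move=> /and3P [hsz hu hc] hv.
case: (rot_to hv) => i t ht.
have hc' : cycle e (v :: t) by rewrite -ht rot_cycle.
have hu' : uniq (v :: t) by rewrite -ht rot_uniq.
have hs' : 3 <= size (v :: t) by rewrite -ht size_rot.
have hm : forall z, z \in t -> z \in c.
  by move=> z hz; rewrite -(mem_rot i) ht inE hz orbT.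
case: t ht hc' hu' hs' hm => [|a t] // ht hc' hu' hs' hm.
case/lastP: t ht hc' hu' hs' hm => [|t b] // ht hc' hu' hs' hm.
exists a, b; split.
- by apply: hm; rewrite inE eqxx.
- by apply: hm; rewrite inE mem_rcons inE eqxx orbT.
- move: hu' => /= /and3P [_ ha _]; apply/eqP => hab; move: ha.
  by rewrite hab mem_rcons inE eqxx.
- by move: hc'; rewrite /= => /andP [].
- move: hc'; rewrite /= => /andP [_]; rewrite rcons_path last_rcons => /andP [_].
  by rewrite hsym.
Qed.

Lemma high_vertex (c : seq T) y0 : (forall x y : T, connect e x y) ->
  is_graph_cycle e c -> y0 \notin c -> exists2 v, v \in c & 3 <= deg e v.
Proof.
move=> hconn hcyc hy0.
have hne : exists x0, x0 \in c.
  move: hcyc => /and3P [hsz _ _]; case: c hsz {hy0} => [|x0 c] //= _.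
  by exists x0; rewrite inE eqxx.
case: hne => x0 hx0.
case hB : [forall x, forall y, e x y ==> ((x \in c) == (y \in c))].
  have hcl : closed e (mem c).
    move=> x y hxy; move/forallP: hB => /(_ x) /forallP /(_ y).
    by rewrite hxy /= => /eqP.
  have := closed_connect hcl (hconn x0 y0).
  by rewrite hx0 (negbTE hy0).
move/negbT/forallPn: hB => [x /forallPn [y]].
rewrite negb_imply => /andP [hxy hne].
wlog hx : x y hxy hne / x \in c.
  move=> H; case hxc : (x \in c); first exact: (H x y).
  apply: (H y x); first by rewrite hsym.
    by rewrite eq_sym.
  by move: hne; rewrite hxc; case: (y \in c).
have hy : y \notin c by move: hne; rewrite hx; case: (y \in c).
case: (cyc_nb c x hcyc hx) => a [b [ha hb hab hxa hxb]].
exists x => //.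
have : size [:: a; b; y] <= deg e x.
  apply: (deg_ge x [:: a; b; y]).
    rewrite /= !inE negb_or hab /=.
    rewrite andbT; apply/andP; split; apply/eqP => h; subst;
      by rewrite ?ha ?hb in hy.
  by move=> z; rewrite !inE => /orP [/eqP ->|/orP [/eqP ->|/eqP ->]].
by [].
Qed.
End G2.

Lemma cyc_elem (T : finType) (e : rel T) c : is_graph_cycle e c -> exists x, x \in c.
Proof.
move=> /and3P [hsz _ _]; case: c hsz => [|x0 c] //= _.
by exists x0; rewrite inE eqxx.
Qed.

Theorem theorem13 (n : nat) (e : rel 'I_n) :
  7 <= n -> Bpp e ->
  [/\ 2 * n - 4 <= irr_t e,
      irr_t e = 2 * n - 4 <-> degseq e = [:: 3; 3] ++ nseq (n - 2) 2,
      degseq e <> [:: 3; 3] ++ nseq (n - 2) 2 -> 4 * n - 10 <= irr_t e &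
      degseq e <> [:: 3; 3] ++ nseq (n - 2) 2 ->
        (irr_t e = 4 * n - 10 <->
         degseq e = [:: 3; 3; 3] ++ nseq (n - 4) 2 ++ [:: 1])].
Proof.
move=> hn [[[hsym hirr] hconn hE] [c1 [c2 [hc1 hc2 hdis]]]].
set s := [seq deg e x | x <- enum 'I_n].
have hirrt : irr_t e = Irr2 s %/ 2.
  rewrite /irr_t /Irr2 /s big_map big_enum /=; congr (_ %/ 2).
  by apply: eq_bigr => x _; rewrite big_map big_enum.
have hdeg : degseq e = sort geq s by [].
rewrite hirrt hdeg.
apply: comb => //.
- by rewrite size_map size_enum_ord.
- apply/allP => a /mapP [x _ ->].
  have : 0 < #|[set~ x]| by rewrite cardsC1 card_ord; lia.
  case/card_gt0P => y; rewrite !inE => hy.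
  apply: (@deg_pos _ e x y); first by rewrite eq_sym.
  exact: hconn.
- rewrite /s big_map big_enum /= (@sum_deg n e hsym hirr) -(@edges_sum n e hsym hirr) hE card_ord; lia.
- case: (cyc_elem _ _ _ hc1) => y1 hy1; case: (cyc_elem _ _ _ hc2) => y2 hy2.
  have hy2n : y2 \notin c1 by rewrite (disjointFl hdis hy2).
  have hy1n : y1 \notin c2 by rewrite (disjointFr hdis hy1).
  case: (@high_vertex _ e hsym c1 y2 hconn hc1 hy2n) => u hu hdu.
  case: (@high_vertex _ e hsym c2 y1 hconn hc2 hy1n) => v hv hdv.
  have huv : u != v by apply/eqP => h; subst; rewrite (disjointFr hdis hu) in hv.
  rewrite /s count_map -size_filter.
  have -> : 2 = size [:: u; v] by [].
  apply: uniq_leq_size; first by rewrite /= inE huv.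
  by move=> z; rewrite !inE mem_filter mem_enum andbT /= => /orP [/eqP ->|/eqP ->].
Qed.
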